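(* If $G$ is a $(3,2)$-critical graph that contains at least three odd cycles, then there exist two odd cycles of $G$ whose intersection is a path with at least one edge.
   Context: All graphs are finite and simple. An odd cycle is a cycle (subgraph) of odd length. For a graph $G$, ${\rm es}_{\chi}(G)$ is the minimum number of edges of $G$ whose removal results in a spanning subgraph $G_1$ with $\chi(G_1)=\chi(G)-1$. $G$ is edge-stability critical if ${\rm es}_{\chi}(G-e)<{\rm es}_{\chi}(G)$ for every edge $e$. $G$ is $(3,2)$-critical if it is edge-stability critical with $\chi(G)=3$ and ${\rm es}_{\chi}(G)=2$. *)

(* Defs.v *)
(* A finite simple graph is given by a vertex finType T and
   an edge set E : {set {set T}} whose elements are 2-element sets. *)
From mathcomp Require Import all_boot.
Set Implicit Arguments. Unset Strict Implicit. Unset Printing Implicit Defensive.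

Section Graphs.
Variable T : finType.

Definition simple_graph (E : {set {set T}}) : Prop :=
  forall e, e \in E -> #|e| = 2.

Definition colorable (E : {set {set T}}) (k : nat) : bool :=
  [exists f : {ffun T -> 'I_k},
     [forall e in E, forall x in e, forall y in e, (x != y) ==> (f x != f y)]].

(* chromatic number: least k such that E is k-colourable (vertex set T;
   #|T| colours always suffice for a simple graph) *)
Definition chi (E : {set {set T}}) : nat :=
  \big[minn/#|T|]_(k < #|T|.+1 | colorable E k) (k : nat).

(* es_chi: least number of edges F whose removal gives a spanning subgraph
   with chromatic number chi(E) - 1 (default #|E|+1 if no such F exists) *)
Definition es_chi (E : {set {set T}}) : nat :=
  \big[minn/#|E|.+1]_(F : {set {set T}} |
        (F \subset E) && (chi (E :\: F) == (chi E).-1)) #|F|.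

Definition es_critical (E : {set {set T}}) : Prop :=
  forall e, e \in E -> es_chi (E :\ e) < es_chi E.

Definition crit32 (E : {set {set T}}) : Prop :=
  [/\ es_critical E, chi E = 3 & es_chi E = 2].

Definition cycle_edges (s : seq T) : {set {set T}} :=
  [set [set x; next s x] | x in s].

Definition is_cycle (E : {set {set T}}) (C : {set {set T}}) : Prop :=
  exists s : seq T, [/\ uniq s, 3 <= size s, C = cycle_edges s & C \subset E].

Definition odd_cycle (E : {set {set T}}) (C : {set {set T}}) : Prop :=
  is_cycle E C /\ odd #|C|.

Definition verts (C : {set {set T}}) : {set T} := cover C.

Definition is_path_graph (V : {set T}) (F : {set {set T}}) : Prop :=
  exists p : seq T, [/\ uniq p, 2 <= size p, V = [set x in p] &
     F = [set e in [seq [set xy.1; xy.2] | xy <- zip p (behead p)]]].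

End Graphs.

(* Main.v *)
Require Import Defs.
From mathcomp Require Import all_boot zify.
Set Implicit Arguments. Unset Strict Implicit. Unset Printing Implicit Defensive.

Section Aux.
Variable T : finType.
Implicit Types (E C : {set {set T}}) (s t : seq T).

Lemma colorable_card E : colorable E #|T|.
Proof.
apply/existsP; exists [ffun x => enum_rank x].
apply/forallP => e; apply/implyP => _; apply/forallP => x; apply/implyP => _.
apply/forallP => y; apply/implyP => _; apply/implyP => nxy.
by rewrite !ffunE; apply: contra nxy => /eqP /enum_rank_inj ->.
Qed.

Lemma chi_colorable E : colorable E (chi E).
Proof.
rewrite /chi; apply: (big_ind (fun m => colorable E m)).
- exact: colorable_card.
- by move=> a b Ha Hb; rewrite /minn; case: ifP.
- by [].
Qed.

Lemma bigmin_le (I : eqType) (r : seq I) (P : pred I) (F : I -> nat) d j :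
  j \in r -> P j -> \big[minn/d]_(i <- r | P i) F i <= F j.
Proof.
elim: r => // h r IH; rewrite inE big_cons => /orP [/eqP <-|jr] Pj.
  by rewrite Pj geq_min leqnn.
case: ifP => _; last exact: IH.
by rewrite geq_min IH ?orbT.
Qed.

Lemma chi_min E k : colorable E k -> chi E <= k.
Proof.
move=> Hk; rewrite /chi.
have [lek|] := leqP k #|T|; last first.
  move=> ltk; apply: leq_trans (ltnW ltk).
  apply: (big_ind (fun m => m <= #|T|)) => //.
  by move=> a b Ha Hb; rewrite geq_min Ha.
  by move=> i _; rewrite -ltnS.
exact: (bigmin_le _ _ (j := Ordinal (n:=#|T|.+1) (m:=k) (lek : k < #|T|.+1)) (mem_index_enum _)).
Qed.

Lemma colorable_widen E k k' : k <= k' -> colorable E k -> colorable E k'.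
Proof.
move=> le /existsP [f Hf]; apply/existsP; exists [ffun x => widen_ord le (f x)].
apply/forallP => e; apply/implyP => He; apply/forallP => x; apply/implyP => Hx.
apply/forallP => y; apply/implyP => Hy; apply/implyP => nxy.
rewrite !ffunE; move/forallP: Hf => /(_ e) /implyP /(_ He) /forallP /(_ x)
  /implyP /(_ Hx) /forallP /(_ y) /implyP /(_ Hy) /implyP /(_ nxy).
by apply: contra => /eqP [] /val_inj ->.
Qed.

Lemma colorable_sub E E' k : E' \subset E -> colorable E k -> colorable E' k.
Proof.
move=> sub /existsP [f Hf]; apply/existsP; exists f.
apply/forallP => e; apply/implyP => He.
by move/forallP: Hf => /(_ e) /implyP; apply; apply: (subsetP sub).
Qed.

Lemma bigmin_lt2 (I : finType) (P : pred I) (F : I -> nat) d :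
  \big[minn/d]_(i | P i) F i < 2 -> d < 2 \/ exists2 i, P i & F i < 2.
Proof.
apply: (big_ind (fun m => m < 2 -> d < 2 \/ exists2 i, P i & F i < 2)).
- by left.
- by move=> a b Ha Hb; rewrite gtn_min => /orP [/Ha|/Hb].
- by move=> i Pi lt; right; exists i.
Qed.

End Aux.


Section Aux2.
Variable T : finType.
Implicit Types (E C : {set {set T}}) (s t q : seq T).

Lemma mem_cycle_edges q e z : e \in cycle_edges q -> z \in e -> z \in q.
Proof.
by case/imsetP => x xq -> /set2P [->|->] //; rewrite mem_next.
Qed.

Lemma in_cycle_edges q z : z \in q -> [set z; next q z] \in cycle_edges q.
Proof. by move=> zq; apply/imsetP; exists z. Qed.

Lemma verts_cycle q : verts (cycle_edges q) = [set z in q].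
Proof.
apply/setP => z; rewrite inE /verts /cover; apply/bigcupP/idP.
  by case=> e He ze; apply: mem_cycle_edges He ze.
by move=> zq; exists [set z; next q z]; [apply: in_cycle_edges | rewrite set21].
Qed.

Lemma cycle_edges_rot n q : uniq q -> cycle_edges (rot n q) = cycle_edges q.
Proof.
move=> uq; apply/setP => e; apply/imsetP/imsetP => [] [x xq ->]; exists x;
  rewrite ?next_rot // ?mem_rot //; by rewrite mem_rot in xq.
Qed.

Lemma cycle_edges_rev q : uniq q -> cycle_edges (rev q) = cycle_edges q.
Proof.
move=> uq; apply/setP => e; apply/imsetP/imsetP => [] [x xq ->].
  rewrite mem_rev in xq; exists (prev q x); first by rewrite mem_prev.
  by rewrite next_rev // next_prev // setUC.
exists (next q x); first by rewrite mem_rev mem_next.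
by rewrite next_rev // prev_next // setUC.
Qed.

Lemma next_head3 (x y z : T) r : x != y ->
  next [:: x, y, z & r] x = y /\ next [:: x, y, z & r] y = z.
Proof. by move=> nxy; rewrite /= eqxx eq_sym (negbTE nxy) eqxx. Qed.

Lemma next_next_neq q x : uniq q -> 3 <= size q -> x \in q -> next q (next q x) != x.
Proof.
move=> uq sq xq; case: (rot_to xq) => i r Hr.
have uq' : uniq (x :: r) by rewrite -Hr rot_uniq.
have sr : 3 <= size (x :: r) by rewrite -Hr size_rot.
rewrite -!(next_rot i uq) Hr.
case: r Hr uq' sr => [|y [|z r]] Hr uq' sr //.
have nxy : x != y by move: uq'; rewrite /= inE negb_or => /andP [/andP [] ].
case: (next_head3 z r nxy) => -> ->.
move: uq'; rewrite /= !inE !negb_or; case/and4P => /and3P [_ H _] _ _ _; by rewrite eq_sym.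
Qed.

Lemma card_cycle q : uniq q -> 3 <= size q -> #|cycle_edges q| = size q.
Proof.
move=> uq sq; rewrite card_in_imset; first by apply/card_uniqP.
move=> x y xq yq /setP H.
apply/eqP; apply/negP => /negP nxy.
have := H x; rewrite set21 => /esym /set2P [/eqP|]; first by rewrite (negbTE nxy).
move=> ex.
have := H y; rewrite set21 => /set2P [/eqP|]; first by rewrite eq_sym (negbTE nxy).
move=> ey.
by have := next_next_neq uq sq xq; rewrite -ey -ex eqxx.
Qed.

Lemma path_parity (g : T -> bool) x r :
  path (fun a b => g a != g b) x r -> g (last x r) = g x (+) odd (size r).
Proof.
elim: r x => [|y r IH] x /=; first by rewrite addbF.
case/andP => H /IH ->; move: H; case: (g x); case: (g y) => //=;
  by case: (odd (size r)).
Qed.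

Lemma odd_cycle_not2 E E' q :
  simple_graph E -> E' \subset E -> uniq q -> 3 <= size q -> odd (size q) ->
  cycle_edges q \subset E' -> ~~ colorable E' 2.
Proof.
move=> sE sub uq sq oq sC; apply/negP => /existsP [f Hf].
pose g z := odd (f z).
have H2 : forall i j : 'I_2, i != j -> odd i != odd j.
  by case=> [[|[|?]] ?] // [[|[|?]] ?].
have cyc : cycle (fun a b => g a != g b) q.
  apply: cycle_from_next => // z zq.
  have Ee : [set z; next q z] \in E' by apply: (subsetP sC); apply: in_cycle_edges.
  have nz : z != next q z.
    by have := sE _ (subsetP sub _ Ee); rewrite cards2; case: (z != next q z).
  apply: H2.
  move/forallP: Hf => /(_ _) /implyP /(_ Ee) /forallP /(_ z) /implyP.
  rewrite set21 => /(_ isT) /forallP /(_ (next q z)) /implyP.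
  by rewrite set22 => /(_ isT) /implyP /(_ nz).
case: q uq sq oq sC cyc => [|h r] // _ _ /= oq _.
rewrite -cats1 => /path_parity; rewrite cats1 last_rcons size_rcons /=.
by move: oq; case: (odd (size r)) => //= _; case: (g h).
Qed.

End Aux2.


Section Aux3.
Variable T : finType.
Implicit Types (E C : {set {set T}}) (s t q p : seq T).

Lemma next_prefix p (u : T) r z : z \in p ->
  next (p ++ u :: r) z = next (p ++ [:: u]) z.
Proof.
move=> zp; rewrite !next_nth !mem_cat zp /= !index_cat zp.
have := zp; rewrite -index_mem.
case: p zp => [|h p'] // zp; rewrite [size _]/= ltnS.
set i := index z (h :: p') => le; rewrite !cat_cons !nth_cat; case: ltnP => // H.
by have -> : i - size p' = 0 by lia.
Qed.

Lemma nth_belast_ (d h : T) r i : i < size r -> nth d (belast h r) i = nth d (h :: r) i.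
Proof.
elim: r h i => [|y r IH] h [|i] //= lt; exact: IH.
Qed.

Definition PE p : {set {set T}} :=
  [set e in [seq [set xy.1; xy.2] | xy <- zip p (behead p)]].

Lemma PE_next h r : uniq (h :: r) ->
  PE (h :: r) = [set [set z; next (h :: r) z] | z in belast h r].
Proof.
move=> u.
have Hz : zip (h :: r) r = [seq (z, next (h :: r) z) | z <- belast h r].
  apply: (eq_from_nth (x0 := (h, h))).
    by rewrite size_map size_belast size_zip /=; lia.
  move=> i lti; have lt : i < size r by move: lti; rewrite size_zip /=; lia.
  rewrite nth_zip_cond lti (nth_map h); last by rewrite size_belast.
  rewrite nth_belast_ //; congr (_, _).
  rewrite next_nth mem_nth ?index_uniq //; exact: ltnW.
apply/setP => e; rewrite inE /= Hz -map_comp.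
apply/mapP/imsetP => [] [z zs ->]; by exists z.
Qed.

Lemma ear E s t x y a b w m :
  simple_graph E ->
  s = x :: a ++ y :: b -> uniq s -> 3 <= size s -> odd (size s) ->
  cycle_edges s \subset E ->
  t = x :: w ++ y :: m -> uniq t -> cycle_edges t \subset E ->
  all (fun z => z \notin s) w -> (w = [::] -> [set x; y] \notin cycle_edges s) ->
  odd (size w + size b) ->
  exists C1 C2, [/\ odd_cycle E C1, odd_cycle E C2, C1 != C2 &
                    is_path_graph (verts C1 :&: verts C2) (C1 :&: C2)].
Proof.
move=> sE Ds us ss os sCE Dt ut sDE ws w0 ow.
set c := x :: w ++ y :: b.
have Dc : c = (x :: w) ++ (y :: b) by [].
have wns : forall z, z \in w -> z \notin s by move=> z zw; exact: (allP ws z zw).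
have uc : uniq c.
  move: us ut; rewrite Ds Dt /c /= !mem_cat !cat_uniq /= !inE.
  case/and5P => /norP [xa /norP [xy xb]] ua /norP [ya _] yb ub.
  case/and5P => /norP [xw _] uw /norP [yw _] _ _.
  rewrite (negbTE xw) (negbTE xy) (negbTE xb) uw (negbTE yw) yb ub /= andbT. apply/negP => /hasP [z zb zw].
  have := wns z zw; rewrite Ds /= !inE mem_cat !inE zb.
  by rewrite !orbT.
have szc : size c = size w + size b + 2 by rewrite /c /= size_cat /=; lia.
have sc : 3 <= size c.
  by rewrite szc; move: ow; case: (size w + size b) => [|n] //= _; lia.
have q_def : rot (size (x :: a)) s = (y :: b) ++ (x :: a) by rewrite Ds -cat_cons rot_size_cat.
have c_rot : rot (size (x :: w)) c = (y :: b) ++ (x :: w) by rewrite Dc rot_size_cat.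
have nb : forall z, z \in y :: b -> next s z = next ((y :: b) ++ [:: x]) z.
  by move=> z zb; rewrite -(next_rot (size (x :: a)) us) q_def next_prefix.
have nc2 : forall z, z \in y :: b -> next c z = next s z.
  move=> z zb; rewrite nb // -(next_rot (size (x :: w)) uc) c_rot next_prefix //.
have nc1 : forall z, z \in x :: w -> next c z = next t z.
  move=> z zw; rewrite Dc next_prefix // Dt -cat_cons next_prefix //.
have memc : forall z, (z \in c) = (z \in x :: w) || (z \in y :: b) by move=> z; rewrite Dc mem_cat.
have cE : cycle_edges c \subset E.
  apply/subsetP => e /imsetP [z zc ->]; move: zc; rewrite memc => /orP [zw|zb].
    rewrite nc1 //; apply: (subsetP sDE); apply: in_cycle_edges.
    by rewrite Dt -cat_cons mem_cat zw.
  rewrite nc2 //; apply: (subsetP sCE); apply: in_cycle_edges.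
  by rewrite Ds /= inE mem_cat zb !orbT.
have notC : forall z, z \in x :: w -> [set z; next c z] \notin cycle_edges s.
  move=> z; have [Dw|[w1 [w' Dw]]] : w = [::] \/ exists w1 w', w = w1 :: w'.
      by case: (w) => [|w1 w']; [left|right; exists w1, w'].
    rewrite Dw inE => /eqP ->; rewrite /c Dw /= eqxx; exact: w0.
  rewrite Dw inE => /orP [/eqP ->|zw].
    rewrite /c Dw /= eqxx; apply/negP => /mem_cycle_edges /(_ (set22 x w1)).
    by apply/negP/wns; rewrite Dw inE eqxx.
  apply/negP => /mem_cycle_edges /(_ (set21 z _)).
  by apply/negP/wns; rewrite Dw.
set q := y :: rcons b x.
have uq : uniq q.
  have : uniq ((y :: b) ++ (x :: a)) by rewrite -q_def rot_uniq.
  rewrite /q -cats1 -cat_cons !cat_uniq => /and3P [-> H _] /=.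
  by move: H => /=; case/norP => H _; rewrite orbF andbT.
have Eq : cycle_edges s :&: cycle_edges c = PE q.
  rewrite /q PE_next // belast_rcons; apply/setP => e; rewrite inE.
  apply/andP/imsetP.
    case=> eC /imsetP [z zc De]; move: zc; rewrite memc => /orP [zw|zb].
      by case/negP: (notC z zw); rewrite -De.
    by exists z => //; rewrite De nc2 // nb // cats1.
  case=> z zb ->; rewrite -cats1 -nb //; split; first by apply: in_cycle_edges; rewrite Ds /= inE mem_cat zb !orbT.
  by rewrite -nc2 //; apply: in_cycle_edges; rewrite memc zb orbT.
have Vq : verts (cycle_edges s) :&: verts (cycle_edges c) = [set z in q].
  apply/setP => z; rewrite !verts_cycle !inE /c /q Ds -cats1 /= !inE !mem_cat !inE.
  case zw: (z \in w) => /=.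
    have := wns z zw; rewrite Ds /= !inE mem_cat !inE.
    by case: (z == x); case: (z \in a); case: (z == y); case: (z \in b).
  by case: (z == x); case: (z \in a); case: (z == y); case: (z \in b).
have oddc : odd #|cycle_edges c| by rewrite card_cycle // szc oddD ow.
exists (cycle_edges s), (cycle_edges c); split.
- split; last by rewrite card_cycle. by exists s.
- split => //. by exists c.
- apply/negP => /eqP Hsc.
  have := notC x (mem_head _ _); rewrite Hsc; apply/negP/negPn.
  by apply: in_cycle_edges; rewrite memc mem_head.
- exists q; split => //; first by rewrite /q /= size_rcons.
Qed.

End Aux3.


Lemma split_first (X : eqType) (P : pred X) (l : seq X) : has P l ->
  exists l1 z l2, [/\ l = l1 ++ z :: l2, P z & all (predC P) l1].
Proof.
elim: l => [|h l IH] //= /orP [Ph|H].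
  by exists [::], h, l.
case: (boolP (P h)) => Ph; first by exists [::], h, l.
case: (IH H) => l1 [z [l2 [-> Pz al]]]; exists (h :: l1), z, l2; split => //=.
by rewrite Ph.
Qed.

Lemma split_last (X : eqType) (P : pred X) (l : seq X) : has P l ->
  exists l1 z l2, [/\ l = l1 ++ z :: l2, P z & all (predC P) l2].
Proof.
elim: l => [|h l IH] //= H.
case: (boolP (has P l)) => Hl.
  by case: (IH Hl) => l1 [z [l2 [-> Pz al]]]; exists (h :: l1), z, l2.
move: H; rewrite (negbTE Hl) orbF => Ph; exists [::], h, l; split => //.
by apply/allP => z zl /=; apply: contra Hl => Pz; apply/hasP; exists z.
Qed.

Section Aux4.
Variable T : finType.
Implicit Types (E C : {set {set T}}) (s t q p : seq T).

Lemma ear2 E s t x y a b w m :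
  simple_graph E ->
  s = x :: a ++ y :: b -> uniq s -> 3 <= size s -> odd (size s) ->
  cycle_edges s \subset E ->
  t = x :: w ++ y :: m -> uniq t -> cycle_edges t \subset E ->
  all (fun z => z \notin s) w -> (w = [::] -> [set x; y] \notin cycle_edges s) ->
  exists C1 C2, [/\ odd_cycle E C1, odd_cycle E C2, C1 != C2 &
                    is_path_graph (verts C1 :&: verts C2) (C1 :&: C2)].
Proof.
move=> sE Ds us ss os sCE Dt ut sDE ws w0.
case: (boolP (odd (size w + size b))) => ow; first exact: (ear sE Ds us ss os sCE Dt ut sDE ws w0 ow).
have ow' : odd (size (rev w) + size a).
  move: os ow; rewrite Ds /= size_cat /= size_rev !oddD /=.
  by case: (odd (size w)); case: (odd (size a)); case: (odd (size b)).
set s' := y :: b ++ x :: a.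
have Ds' : s' = rot (size (x :: a)) s by rewrite Ds -cat_cons rot_size_cat.
have us' : uniq s' by rewrite Ds' rot_uniq.
have Cs' : cycle_edges s' = cycle_edges s by rewrite Ds' cycle_edges_rot.
set t' := y :: rev w ++ x :: rev m.
have Drt : rev t = rev m ++ (y :: rev w ++ [:: x]).
  by rewrite Dt rev_cons rev_cat rev_cons -!cats1 -!catA.
have Dt' : t' = rot (size (rev m)) (rev t) by rewrite Drt rot_size_cat /t' /= -catA.
have ut' : uniq t' by rewrite Dt' rot_uniq rev_uniq.
have Ct' : cycle_edges t' = cycle_edges t by rewrite Dt' cycle_edges_rot ?rev_uniq // cycle_edges_rev.
apply: (@ear T E s' t' y x b a (rev w) (rev m) sE erefl us') => //.
- by rewrite Ds' size_rot.
- by rewrite Ds' size_rot.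
- by rewrite Cs'.
- by rewrite Ct'.
- by apply/allP => z; rewrite mem_rev Ds' mem_rot => /(allP ws).
- move=> Hw; have /w0 : w = [::] by rewrite -(revK w) Hw. by rewrite Cs' setUC.
Qed.

End Aux4.


Section Aux5.
Variable T : finType.
Implicit Types (E C : {set {set T}}) (s t q : seq T).

Lemma prev_head (v : T) r : uniq (v :: r) -> prev (v :: r) v = last v r.
Proof.
move=> /andP [vr _]; rewrite prev_nth mem_head memNindex //.
by rewrite -[size r]/((size (v :: r)).-1) nth_last.
Qed.

Lemma ear3 E s t e0 e1 :
  simple_graph E -> uniq s -> 3 <= size s -> odd (size s) ->
  cycle_edges s \subset E -> uniq t -> cycle_edges t \subset E ->
  e0 \in cycle_edges s -> e0 \in cycle_edges t ->
  e1 \in cycle_edges t -> e1 \notin cycle_edges s ->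
  exists C1 C2, [/\ odd_cycle E C1, odd_cycle E C2, C1 != C2 &
                    is_path_graph (verts C1 :&: verts C2) (C1 :&: C2)].
Proof.
move=> sE us ss os sCE ut sDE e0C e0D /imsetP [u uT De1] e1C.
have vt : next t u \in t by rewrite mem_next.
case: (rot_to vt) => i r Hr.
have ut1 : uniq (next t u :: r) by rewrite -Hr rot_uniq.
have Ct1 : cycle_edges (next t u :: r) = cycle_edges t by rewrite -Hr cycle_edges_rot.
have mem1 : forall z, (z \in next t u :: r) = (z \in t) by move=> z; rewrite -Hr mem_rot.
have ulast : u = last (next t u) r.
  by rewrite -prev_head // -Hr prev_rot // prev_next.
move: Hr ut1 Ct1 mem1 ulast; set v := next t u => Hr ut1 Ct1 mem1 ulast.
have := sE _ (subsetP sCE _ e0C); move/eqP; case/cards2P => p1 [p2 [np De0]].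
have p1s : p1 \in s by apply: (mem_cycle_edges e0C); rewrite De0 set21.
have p2s : p2 \in s by apply: (mem_cycle_edges e0C); rewrite De0 set22.
have p1t : p1 \in v :: r by rewrite mem1; apply: (mem_cycle_edges e0D); rewrite De0 set21.
have p2t : p2 \in v :: r by rewrite mem1; apply: (mem_cycle_edges e0D); rewrite De0 set22.
have hs : has (mem s) (v :: r) by apply/hasP; exists p1.
case: (split_first hs) => w2 [y [m' [Dt1 ys w2s]]].
have hm : has (mem s) m'.
  have [p [ps pt py]] : exists p, [/\ p \in s, p \in v :: r & p != y].
    case: (eqVneq p1 y) => [e|n]; last by exists p1.
    by exists p2; split => //; rewrite -e eq_sym.
  apply/hasP; exists p => //; move: pt; rewrite Dt1 mem_cat inE (negbTE py) /=.
  case/orP => // pw; by move: (allP w2s p pw); rewrite /= ps.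
case: (split_last hm) => m [x [w1 [Dm xs w1s]]].
rewrite Dm in Dt1.
set t2 := x :: (w1 ++ w2) ++ y :: m.
have Dt2 : t2 = rot (size (w2 ++ y :: m)) (v :: r).
  by rewrite Dt1 -cat_cons catA rot_size_cat /t2 /= catA.
have ut2 : uniq t2 by rewrite Dt2 rot_uniq.
have Ct2 : cycle_edges t2 = cycle_edges t by rewrite Dt2 cycle_edges_rot.
have xy : x != y.
  move: ut1; rewrite Dt1 cat_uniq => /and3P [_ _] /= /andP [].
  by rewrite mem_cat inE negb_or eq_sym => /andP [_ /norP []].
have ys0 : y \in s by [].
case: (rot_to xs) => j s0 Hs.
have ys0' : y \in s0.
  by move: ys0; rewrite -(mem_rot j) Hs inE eq_sym (negbTE xy).
case/splitPr: ys0' Hs => a b Hs.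
have Cs' : cycle_edges (x :: a ++ y :: b) = cycle_edges s by rewrite -Hs cycle_edges_rot.
apply: (@ear2 T E (x :: a ++ y :: b) t2 x y a b (w1 ++ w2) m sE erefl) => //.
- by rewrite -Hs rot_uniq.
- by rewrite -Hs size_rot.
- by rewrite -Hs size_rot.
- by rewrite Cs'.
- by rewrite Ct2.
- apply/allP => z; rewrite mem_cat -Hs mem_rot => /orP [] zw.
    by move: (allP w1s z zw).
  by move: (allP w2s z zw).
- move=> /(congr1 size); rewrite size_cat => /eqP; rewrite addn_eq0.
  case/andP => /nilP w1n /nilP w2n.
  rewrite w1n w2n /= in Dt1; case: Dt1 => Dv Dr.
  rewrite Cs'; suff -> : [set x; y] = e1 by [].
  by rewrite De1 -/v ulast Dr last_cat /= Dv.
Qed.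

End Aux5.


Section Aux6.
Variable T : finType.
Implicit Types (E C : {set {set T}}) (s t q : seq T).

Lemma odd_cycleP E C : odd_cycle E C ->
  exists s, [/\ uniq s, 3 <= size s, odd (size s), C = cycle_edges s & C \subset E].
Proof.
case=> [[s [us ss -> sub]]] o; exists s; split => //.
by rewrite -card_cycle.
Qed.

Lemma pair_case E C C' : simple_graph E -> odd_cycle E C -> odd_cycle E C' ->
  C != C' -> C :&: C' != set0 ->
  exists C1 C2, [/\ odd_cycle E C1, odd_cycle E C2, C1 != C2 &
                    is_path_graph (verts C1 :&: verts C2) (C1 :&: C2)].
Proof.
move=> sE /odd_cycleP [s [us ss os DC sC]] /odd_cycleP [t [ut st ot DC' sC']] nCC.
case/set0Pn => e0; rewrite inE => /andP [e0C e0C'].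
case: (boolP (C' \subset C)) => H1.
  case: (boolP (C \subset C')) => H2.
    by case/eqP: nCC; apply/eqP; rewrite eqEsubset H2 H1.
  case/subsetPn: H2 => e1 e1C e1C'.
  by apply: (@ear3 T E t s e0 e1) => //; rewrite -?DC -?DC'.
case/subsetPn: H1 => e1 e1C' e1C.
by apply: (@ear3 T E s t e0 e1) => //; rewrite -?DC -?DC'.
Qed.

Lemma disjoint_case E C1 C2 C3 : simple_graph E -> crit32 E ->
  odd_cycle E C1 -> odd_cycle E C2 -> odd_cycle E C3 ->
  C1 :&: C2 = set0 -> C1 :&: C3 = set0 -> C2 :&: C3 = set0 -> False.
Proof.
move=> sE [crit chi3 es2] /odd_cycleP [s1 [u1 z1 o1 D1 sub1]]
  /odd_cycleP [s2 [u2 z2 o2 D2 sub2]] /odd_cycleP [s3 [u3 z3 o3 D3 sub3]] d12 d13 d23.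
have [e eC1] : exists e, e \in C1.
  case: s1 u1 z1 o1 D1 sub1 => [|h r] // _ _ _ D1 _; exists [set h; next (h :: r) h].
  by rewrite D1; apply: in_cycle_edges; rewrite mem_head.
have eE : e \in E by apply: (subsetP sub1).
have lt := crit e eE; rewrite es2 in lt.
have notin : forall C, C1 :&: C = set0 -> C \subset E -> C \subset E :\ e.
  move=> C d sub; apply/subsetP => f fC; rewrite !inE (subsetP sub _ fC) andbT.
  apply/negP => /eqP fe; have := eC1; rewrite -fe => fC1.
  by move: d => /setP /(_ f); rewrite !inE fC1 fC.
have s2e := notin _ d12 sub2; have s3e := notin _ d13 sub3.
case: (bigmin_lt2 lt) => [|[F /andP [FE /eqP chiF] cF]].
  move=> H0; have /eqP /cards0_eq Ee : #|E :\ e| == 0 by move: H0; clear; lia.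
  case: s2 u2 z2 o2 D2 sub2 s2e => [|h r] // _ _ _ D2 _.
  rewrite Ee subset0 D2 => /eqP /setP /(_ [set h; next (h :: r) h]).
  by rewrite in_cycle_edges ?mem_head // inE.
set H := (E :\ e) :\: F.
have HE : H \subset E by apply: subset_trans (subsetDl _ _) (subD1set _ _).
have key : forall C, C \subset E :\ e -> C :&: F = set0 -> C \subset H.
  move=> C sub d; apply/subsetP => f fC; rewrite inE (subsetP sub _ fC) andbT.
  by apply/negP => fF; move: d => /setP /(_ f); rewrite inE fC fF inE.
have notcol : ~~ colorable H 2.
  case: (eqVneq (C2 :&: F) set0) => [d2|/set0Pn [f2]].
    by apply: (odd_cycle_not2 sE HE u2 z2 o2); rewrite -D2; apply: key.
  case: (eqVneq (C3 :&: F) set0) => [d3 _|/set0Pn [f3]].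
    by apply: (odd_cycle_not2 sE HE u3 z3 o3); rewrite -D3; apply: key.
  rewrite !inE => /andP [f3C f3F] /andP [f2C f2F].
  have nf : f2 != f3.
    apply/negP => /eqP ef; move: d23 => /setP /(_ f2); rewrite inE f2C ef f3C inE.
    by [].
  have : #|[set f2; f3]| <= #|F|.
    by apply: subset_leq_card; apply/subsetP => g /set2P [->|->].
  by rewrite cards2 nf leqNgt cF.
have chiH : 2 < chi H.
  rewrite ltnNge; apply/negP => le2; case/negP: notcol.
  exact: (colorable_widen le2 (chi_colorable H)).
have chiEe : chi (E :\ e) <= 3.
  apply: chi_min; apply: (colorable_sub (subD1set _ _)).
  by rewrite -chi3; apply: chi_colorable.
move: chiH chiEe; rewrite -/H chiF; move: (chi (E :\ e)) => k; clear; lia.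
Qed.

End Aux6.

Theorem lemma2p5 (T : finType) (E : {set {set T}}) :
  simple_graph E ->
  crit32 E ->
  (exists C1 C2 C3, [/\ odd_cycle E C1, odd_cycle E C2, odd_cycle E C3 &
                       [/\ C1 != C2, C1 != C3 & C2 != C3]]) ->
  exists C1 C2, [/\ odd_cycle E C1, odd_cycle E C2, C1 != C2 &
                    is_path_graph (verts C1 :&: verts C2) (C1 :&: C2)].
Proof.
move=> sE cr [C1 [C2 [C3 [o1 o2 o3 [n12 n13 n23]]]]].
case: (eqVneq (C1 :&: C2) set0) => [d12|i12]; last exact: (pair_case sE o1 o2 n12 i12).
case: (eqVneq (C1 :&: C3) set0) => [d13|i13]; last exact: (pair_case sE o1 o3 n13 i13).
case: (eqVneq (C2 :&: C3) set0) => [d23|i23]; last exact: (pair_case sE o2 o3 n23 i23).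
by case: (disjoint_case sE cr o1 o2 o3 d12 d13 d23).
Qed.
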